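(* Let $K$ be any field, $n\ge 3$, $V$ an $n$-dimensional $K$-vector space, and let $S=\{t_\alpha=1+v_\alpha\otimes\phi_\alpha:\alpha\in I\}\subseteq SL(V)$ be a set of transvections. Then $S$ generates an irreducible subgroup of $SL(V)$ if and only if $S$ satisfies both of the following: (P1) $\langle v_\alpha:\alpha\in I\rangle=V$ and $\langle\phi_\alpha:\alpha\in I\rangle=V^*$; (P2) the transvection graph $\Gamma(S)$ is strongly connected.
   Context: A transvection is $1+d\otimes\phi\in SL(V)$ acting by $x\mapsto x+\phi(x)d$, $0\ne d\in V$, $0\neq\phi\in V^*$, $\phi(d)=0$. For a set $S$ of transvections, $\Gamma(S)$ is the directed graph with vertex set $S\setminus\{1\}$ and a directed edge from $1+d_1\otimes\phi_1$ to $1+d_2\otimes\phi_2$ iff $\phi_2(d_1)\neq 0$. *)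

(* Defs.v *)
From HB Require Import structures.
From mathcomp Require Import all_boot all_order all_algebra.
From Stdlib Require Import Relation_Operators.
Set Implicit Arguments. Unset Strict Implicit. Unset Printing Implicit Defensive.
Import GRing.Theory.
Local Open Scope ring_scope.

(* V = 'rV[K]_n (row vectors), V^* = 'cV[K]_n, phi(x) = (x *m phi) 0 0.
   The transvection 1 + d (x) phi acts on row vectors by right
   multiplication with the matrix 1 + phi *m d :  x |-> x + phi(x) d. *)

Definition fapp (K : fieldType) (n : nat) (phi : 'cV[K]_n) (x : 'rV[K]_n) : K :=
  (x *m phi) 0 0.

Definition transv (K : fieldType) (n : nat) (d : 'rV[K]_n) (phi : 'cV[K]_n)
  : 'M[K]_n := 1%:M + phi *m d.

Definition is_transv_data (K : fieldType) (n : nat) (d : 'rV[K]_n) (phi : 'cV[K]_n)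
  : Prop := d != 0 /\ phi != 0 /\ fapp phi d = 0.

Inductive gen_group (K : fieldType) (n : nat) (S : 'M[K]_n -> Prop) : 'M[K]_n -> Prop :=
| gen_one : gen_group S 1%:M
| gen_in  : forall s, S s -> gen_group S s
| gen_mul : forall g h, gen_group S g -> gen_group S h -> gen_group S (g *m h)
| gen_inv : forall g, gen_group S g -> gen_group S (invmx g).

Definition irreducible_mxgroup (K : fieldType) (n : nat) (G : 'M[K]_n -> Prop) : Prop :=
  forall U : 'M[K]_n, (forall g, G g -> (U *m g <= U)%MS) -> U = 0 \/ row_full U.

Definition spans_rV (K : fieldType) (n : nat) (I : Type) (v : I -> 'rV[K]_n) : Prop :=
  forall x : 'rV[K]_n, exists (s : seq I) (c : I -> K), x = \sum_(a <- s) c a *: v a.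

Definition spans_cV (K : fieldType) (n : nat) (I : Type) (f : I -> 'cV[K]_n) : Prop :=
  forall x : 'cV[K]_n, exists (s : seq I) (c : I -> K), x = \sum_(a <- s) c a *: f a.

Definition tedge (K : fieldType) (n : nat) (I : Type) (v : I -> 'rV[K]_n)
  (phi : I -> 'cV[K]_n) (a b : I) : Prop := fapp (phi b) (v a) <> 0.

(* Gamma(S) strongly connected, where the vertices are the transvections
   t_a = transv (v a) (phi a) (distinct indices may give the same vertex):
   between any two vertices there is a directed path. *)
Definition strongly_connected_tgraph (K : fieldType) (n : nat) (I : Type)
  (v : I -> 'rV[K]_n) (phi : I -> 'cV[K]_n) : Prop :=
  forall a b : I, transv (v a) (phi a) = transv (v b) (phi b)
                  \/ clos_trans I (tedge v phi) a b.

(* Main.v *)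
Require Import Defs.
From HB Require Import structures.
From mathcomp Require Import all_boot all_order all_algebra.
From mathcomp Require Import zify.
From Stdlib Require Import Relation_Operators Classical ClassicalEpsilon.
Set Implicit Arguments. Unset Strict Implicit. Unset Printing Implicit Defensive.
Import GRing.Theory.
Local Open Scope ring_scope.

Section Helpers.
Variables (K : fieldType) (n : nat) (I : Type).

Fixpoint span (w : I -> 'rV[K]_n) (s : seq I) : 'M[K]_n :=
  match s with [::] => 0 | a :: s' => (<<w a>> + span w s')%MS end.

Fixpoint indep (w : I -> 'rV[K]_n) (s : seq I) : Prop :=
  match s with [::] => True | a :: s' => ~ (w a <= span w s')%MS /\ indep w s' end.

Lemma in_span w s a : List.In a s -> (w a <= span w s)%MS.
Proof.
elim: s => [|b s IH] //= [->|H].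
  by apply: submx_trans (addsmxSl _ _); rewrite genmxE.
by apply: submx_trans (IH H) (addsmxSr _ _).
Qed.

Lemma fin_span_aux w (P : I -> Prop) k :
  (exists s, (forall a, List.In a s -> P a) /\ indep w s /\
     forall b, P b -> (w b <= span w s)%MS) \/
  (exists s, (forall a, List.In a s -> P a) /\ indep w s /\ (k <= \rank (span w s))%N).
Proof.
elim: k => [|k [L|[s [Hs [Hi Hk]]]]].
- by right; exists [::].
- by left.
- case: (classic (forall b, P b -> (w b <= span w s)%MS)) => H.
    by left; exists s.
  have [b Hb] := not_all_ex_not _ _ H.
  have [Pb Nb] := imply_to_and _ _ Hb.
  right; exists (b :: s); split; [|split].
  + by move=> a /= [<-|]; auto.
  + by split.
  + apply: (leq_ltn_trans Hk); apply: rank_ltmx; rewrite ltmxE addsmxSr /=.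
    rewrite addsmx_sub negb_and; apply/orP; left; rewrite genmxE; exact/negP.
Qed.

Lemma fin_span w (P : I -> Prop) :
  exists s, (forall a, List.In a s -> P a) /\ indep w s /\
     forall b, P b -> (w b <= span w s)%MS.
Proof.
case: (fin_span_aux w P n.+1) => // [[s [_ [_ Hk]]]].
by have := rank_leq_row (span w s); rewrite leqNgt Hk.
Qed.

Lemma sum_ext (F G : I -> 'rV[K]_n) s :
  (forall b, List.In b s -> F b = G b) ->
  \sum_(b <- s) F b = \sum_(b <- s) G b.
Proof.
elim: s => [|a s IH] H; first by rewrite !big_nil.
rewrite !big_cons H /=; last by left.
by rewrite IH // => b Hb; apply: H; right.
Qed.

Lemma span_comb w s x : indep w s -> (x <= span w s)%MS ->
  exists c : I -> K, x = \sum_(a <- s) c a *: w a.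
Proof.
elim: s x => [|a s IH] x /=.
  by move=> _; rewrite submx0 => /eqP ->; exists (fun _ => 0); rewrite big_nil.
move=> [Na Hi] /sub_addsmxP [[u1 u2] /= ->].
have [c Hc] := IH (u2 *m span w s) Hi (submxMl _ _).
have : (u1 *m <<w a>> <= w a)%MS by rewrite -(genmxE (w a)) submxMl.
case/sub_rVP => k Hk.
exists (fun b => if excluded_middle_informative (b = a) then k else c b).
rewrite big_cons; destruct (excluded_middle_informative (a = a)) as [e|N]; last by [].
rewrite Hk Hc; congr (_ + _); apply: sum_ext => b Hb.
destruct (excluded_middle_informative (b = a)) as [E|]; last by []; subst b.
by case: Na; apply: in_span.
Qed.

Lemma span_ker w s (f : 'cV[K]_n) :
  (forall b, List.In b s -> w b *m f = 0) -> span w s *m f = 0.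
Proof.
move=> H; apply/eqP; rewrite -sub_kermx.
elim: s H => [|a s IH] H /=; first by rewrite sub0mx.
rewrite addsmx_sub genmxE sub_kermx H ?eqxx /=; last by left.
by apply: IH => b Hb; apply: H; right.
Qed.

Lemma full_ker (N : 'M[K]_n) (f : 'cV[K]_n) : row_full N -> N *m f = 0 -> f = 0.
Proof.
rewrite -sub1mx => /submxP [D HD] Hf.
by rewrite -(mul1mx f) HD -mulmxA Hf mulmx0.
Qed.

Lemma mx11_fapp (f : 'cV[K]_n) (x : 'rV[K]_n) : x *m f = (fapp f x)%:M.
Proof. exact: mx11_scalar. Qed.

Lemma transv_act (x : 'rV[K]_n) d f : x *m transv d f = x + fapp f x *: d.
Proof. by rewrite /transv mulmxDr mulmx1 mulmxA mx11_fapp mul_scalar_mx. Qed.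

Lemma transvM_act m (X : 'M[K]_(m, n)) d f : X *m transv d f = X + (X *m f) *m d.
Proof. by rewrite /transv mulmxDr mulmx1 mulmxA. Qed.

Lemma transv_unit (d : 'rV[K]_n) (f : 'cV[K]_n) : fapp f d = 0 -> transv d f \in unitmx.
Proof.
move=> H; have [] // := @mulmx1_unit _ _ (transv d f) (transv (- d) f).
rewrite /transv mulmxDr mulmx1 mulmxDl mul1mx -!addrA.
rewrite mulmxA -(mulmxA f) mx11_fapp H raddf0 mulmx0 mul0mx addr0.
by rewrite mulmxN subrr addr0.
Qed.

Lemma gen_unit (S : 'M[K]_n -> Prop) :
  (forall s, S s -> s \in unitmx) -> forall g, gen_group S g -> g \in unitmx.
Proof.
move=> HS g; elim => [|s Hs|g' h _ Hg _ Hh|g' _ Hg].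
- exact: unitmx1.
- exact: HS.
- by rewrite unitmx_mul Hg Hh.
- by rewrite unitmx_inv.
Qed.

Lemma gen_inv (S : 'M[K]_n -> Prop) (W : 'M[K]_n) :
  (forall s, S s -> s \in unitmx) -> (forall s, S s -> (W *m s <= W)%MS) ->
  forall g, gen_group S g -> (W *m g <= W)%MS.
Proof.
move=> HU HS g; elim => [|s Hs|g' h Hg' Hg _ Hh|g' Hg' Hg].
- by rewrite mulmx1.
- exact: HS.
- by rewrite mulmxA; apply: submx_trans Hh; apply: submxMr.
- have Ug := gen_unit HU Hg'.
  have sW : (W <= W *m g')%MS.
    by rewrite -(mxrank_leqif_sup Hg).2 mxrankMfree ?row_free_unit.
  have := submxMr (invmx g') sW.
  by rewrite -mulmxA mulmxV // mulmx1.
Qed.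

End Helpers.
Theorem theorem5p2 (K : fieldType) (n : nat) (I : Type)
  (v : I -> 'rV[K]_n) (phi : I -> 'cV[K]_n) :
  (3 <= n)%N ->
  (forall a, is_transv_data (v a) (phi a)) ->
  irreducible_mxgroup (gen_group (fun t => exists a, t = transv (v a) (phi a)))
  <-> (spans_rV v /\ spans_cV phi) /\ strongly_connected_tgraph v phi.
Proof.
move=> Hn Ht.
set S := (fun t => exists a, t = transv (v a) (phi a)).
have HU : forall s, S s -> s \in unitmx.
  by move=> s [a ->]; apply: transv_unit; case: (Ht a) => _ [].
have Hinv : forall W : 'M[K]_n,
    (forall a, (W *m transv (v a) (phi a) <= W)%MS) ->
    forall g, gen_group S g -> (W *m g <= W)%MS.
  by move=> W HW; apply: gen_inv => // s [a ->].
have vnz : forall a, v a != 0 by move=> a; case: (Ht a).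
have phinz : forall a, phi a != 0 by move=> a; case: (Ht a) => _ [].
split.
- move=> Hirr.
  have [a0 _] : exists a0 : I, True.
    apply: NNPP => Hno.
    have all1 : forall g, gen_group S g -> g = 1%:M.
      move=> g; elim => [|s [a _]|g' h _ -> _ ->|g' _ ->].
      + by [].
      + by case: Hno; exists a.
      + by rewrite mulmx1.
      + exact: invmx1.
    have n0 : (0 < n)%N by apply: leq_trans Hn.
    pose i0 : 'I_n := Ordinal n0.
    case: (Hirr (delta_mx i0 i0)).
    + by move=> g /all1 ->; rewrite mulmx1 submx_refl.
    + move=> E; have := congr1 (fun M : 'M[K]_n => M i0 i0) E.
      by rewrite !mxE eqxx /= => /eqP; rewrite oner_eq0.
    + by rewrite /row_full mxrank_delta => /eqP E; rewrite -E in Hn.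
  split; [split|].
  + have [s [_ [Hi Hall]]] := fin_span v (fun _ => True).
    case: (Hirr (span v s)).
    * apply: Hinv => a; rewrite transvM_act; apply: addmx_sub => //.
      exact: submx_trans (submxMl _ _) (Hall a Logic.I).
    * move=> E; have := Hall a0 Logic.I; rewrite E submx0 => H.
      by move: (vnz a0); rewrite H.
    * move=> Hf x; have [c Hc] := span_comb Hi (submx_full x Hf); by exists s, c.
  + pose w := fun a => (phi a)^T.
    have [s [_ [Hi Hall]]] := fin_span w (fun _ => True).
    pose N := kermx (span w s)^T.
    have Nphi : forall a, N *m phi a = 0.
      move=> a; have /submxP [D HD] := Hall a Logic.I.
      have -> : phi a = (span w s)^T *m D^T by rewrite -trmx_mul -HD trmxK.
      by rewrite mulmxA mulmx_ker mul0mx.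
    case: (Hirr N).
    * apply: Hinv => a; rewrite transvM_act Nphi mul0mx addr0; exact: submx_refl.
    * move=> N0 x.
      have Hr : row_full (span w s).
        have := mxrank_ker (span w s)^T; rewrite -/N N0 mxrank0 mxrank_tr.
        move=> E; rewrite /row_full eqn_leq rank_leq_row /=.
        by move: E (rank_leq_row (span w s)); clear; lia.
      have [c Hc] := span_comb Hi (submx_full x^T Hr).
      exists s, c; rewrite -(trmxK x) Hc linear_sum; apply: eq_bigr => a _.
      by rewrite linearZ /= trmxK.
    * move=> Hf; have := full_ker Hf (Nphi a0) => H.
      by move: (phinz a0); rewrite H eqxx.
  + move=> a b; right.
    pose P := fun c => c = a \/ clos_trans I (tedge v phi) a c.
    have Pstep : forall c d, P c -> tedge v phi c d -> clos_trans I (tedge v phi) a d.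
      move=> c d [->|Hc] He; first exact: t_step.
      exact: t_trans Hc (t_step _ _ _ _ He).
    have [s [Hs [Hi Hall]]] := fin_span v P.
    have Pa : P a by left.
    case: (Hirr (span v s)).
    * apply: Hinv => d; rewrite transvM_act; apply: addmx_sub => //.
      case: (classic (P d)) => Pd.
        exact: submx_trans (submxMl _ _) (Hall d Pd).
      rewrite (span_ker (f := phi d)) ?mul0mx ?sub0mx // => b' Hb'.
      rewrite mx11_fapp; apply: NNPP => Hne; apply: Pd; right.
      apply: Pstep (Hs _ Hb') _ => Hz; apply: Hne; by rewrite Hz raddf0.
    * move=> E; have := Hall a Pa; rewrite E submx0 => H.
      by move: (vnz a); rewrite H.
    * move=> Hf.
      case: (classic (exists b', List.In b' s /\ tedge v phi b' b)).
        by move=> [b' [Hb' He]]; apply: Pstep (Hs _ Hb') He.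
      move=> Hno; have := full_ker Hf (span_ker (w := v) (s := s) (f := phi b) _).
      move=> H; move: (phinz b); rewrite H ?eqxx // => b' Hb'.
      rewrite mx11_fapp; apply: NNPP => Hne; apply: Hno; exists b'; split => //.
      by move=> Hz; apply: Hne; rewrite Hz raddf0.
- move=> [[Hv Hphi] Hsc] U HUinv.
  case: (eqVneq U 0) => [->|Unz]; [by left|right].
  have HUa : forall a, (U *m transv (v a) (phi a) <= U)%MS.
    by move=> a; apply: HUinv; apply: gen_in; exists a.
  have key1 : forall x a, (x <= U)%MS -> fapp (phi a) x != 0 -> (v a <= U)%MS.
    move=> x a Hx Hf.
    have H1 := submx_trans (submxMr (transv (v a) (phi a)) Hx) (HUa a).
    have H2 : (fapp (phi a) x *: v a <= U)%MS.
      have -> : fapp (phi a) x *: v a = x *m transv (v a) (phi a) - x.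
        by rewrite transv_act addrAC subrr add0r.
      by apply: addmx_sub => //; rewrite eqmx_opp.
    by rewrite -(scale1r (v a)) -(mulVf Hf) -scalerA scalemx_sub.
  have [x [a [Hx Hxa]]] : exists x a, (x <= U)%MS /\ fapp (phi a) x != 0.
    have [i Hi] : exists i, row i U != 0.
      apply: NNPP => H; move/eqP: Unz; apply.
      apply: (proj1 (row_matrixP _ _)) => i; rewrite row0; apply/eqP; apply: NNPP => Hne.
      by apply: H; exists i; apply/negP.
    exists (row i U); apply: NNPP => H; move: Hi => /eqP; apply.
    apply/rowP => j; rewrite mxE.
    have [s [c Hc]] := Hphi (delta_mx j 0).
    have : col j (row i U) = 0.
      rewrite colE Hc mulmx_sumr; apply: big1 => a _.
      rewrite -scalemxAr mx11_fapp.
      have -> : fapp (phi a) (row i U) = 0.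
        apply: NNPP => Hne; apply: H; exists a; split; first exact: row_sub.
        exact/eqP.
      by rewrite raddf0 scaler0.
    by move=> /(congr1 (fun M : 'cV[K]_1 => M 0 0)); rewrite !mxE.
  have Hva := key1 x a Hx Hxa.
  have prop : forall c d, clos_trans I (tedge v phi) c d -> (v c <= U)%MS -> (v d <= U)%MS.
    move=> c d; elim => [c' d' He|c' d' e' _ IH1 _ IH2] H; last by auto.
    by apply: key1 H _; apply/eqP.
  have allv : forall b, (v b <= U)%MS.
    move=> b; case: (Hsc a b); last by move=> Hab; exact: prop Hab Hva.
    move=> E.
    have E2 : phi a *m v a = phi b *m v b by move: E; rewrite /transv => /addrI.
    have [i Hi] : exists i, phi b i 0 != 0.
      apply: NNPP => H; move: (phinz b) => /eqP; apply.
      apply/matrixP => i j; rewrite (ord1 j) mxE; apply/eqP; apply: NNPP => Hne.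
      by apply: H; exists i; apply/negP.
    have E3 : phi b i 0 *: v b = phi a i 0 *: v a.
      have := congr1 (row i) E2; rewrite !row_mul.
      rewrite [row i (phi a)]mx11_scalar [row i (phi b)]mx11_scalar !mul_scalar_mx !mxE.
      by move=> ->.
    have : (phi b i 0 *: v b <= U)%MS by rewrite E3 scalemx_sub.
    by move=> H; rewrite -(scale1r (v b)) -(mulVf Hi) -scalerA scalemx_sub.
  rewrite -sub1mx; apply/row_subP => i.
  have [s [c ->]] := Hv (row i 1%:M).
  by apply: summx_sub => b _; apply: scalemx_sub.
Qed.
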